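(* The family $\mathcal{A}$ of all infinite subsets of $\mathbb{N}^{<\mathbb{N}}$ which contain no infinite chain is an M-family.
   Context: $\mathbb{N}^{<\mathbb{N}}$ is the tree of finite sequences of naturals ordered by end-extension $\sqsubset$; a chain is a subset linearly ordered by $\sqsubseteq$. An M-family is a hereditary (closed under infinite subsets) family $\mathcal{A}$ of infinite subsets such that for every sequence $(A_n)_n$ in $\mathcal{A}$ there is $A\in\mathcal{A}$ with $A\setminus\bigcup_{i\ge n}A_i$ finite for every $n$. *)

(* Defs.v *)
(* N^{<N} is modelled as [list nat]; subsets as predicates. *)
From Stdlib Require Import List Arith.
Import ListNotations.

Definition finite_set {X : Type} (S : X -> Prop) : Prop :=
  exists l : list X, forall x, S x -> In x l.

Definition infinite_set {X : Type} (S : X -> Prop) : Prop := ~ finite_set S.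

Definition subset {X : Type} (B A : X -> Prop) : Prop := forall x, B x -> A x.

Definition seq_le (s t : list nat) : Prop := exists u, t = s ++ u.

Definition is_chain (C : list nat -> Prop) : Prop :=
  forall s t, C s -> C t -> seq_le s t \/ seq_le t s.

Definition M_family {X : Type} (F : (X -> Prop) -> Prop) : Prop :=
  (forall A, F A -> infinite_set A) /\
  (forall A B, F A -> subset B A -> infinite_set B -> F B) /\
  (forall An : nat -> (X -> Prop), (forall n, F (An n)) ->
     exists A, F A /\
       forall n, finite_set (fun x => A x /\ ~ (exists i, n <= i /\ An i x))).

Definition no_inf_chain_family (A : list nat -> Prop) : Prop :=
  infinite_set A /\
  ~ (exists C, subset C A /\ infinite_set C /\ is_chain C).

(* Main.v *)
Require Import Defs.
From Stdlib Require Import List Arith Lia FinFun Classical ClassicalEpsilon.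
Import ListNotations.

Definition incomp (x y : list nat) : Prop := ~ seq_le x y /\ ~ seq_le y x.

Definition state : Type := (list (list nat) * nat * (nat -> Prop))%type.

Definition Inv (An : nat -> list nat -> Prop) (s : state) : Prop :=
  let '(F, lo, M) := s in
  (forall m, M m -> lo <= m) /\ (forall k, exists m, k <= m /\ M m) /\
  (forall m, M m -> infinite_set (fun x => An m x /\ forall f, In f F -> incomp f x)).

Definition Rel (An : nat -> list nat -> Prop) (s s' : state) : Prop :=
  let '(F, lo, M) := s in
  exists a n M', M n /\ An n a /\ (forall f, In f F -> incomp f a) /\
    s' = (a :: F, S n, M') /\ Inv An s'.

Lemma infinite_mono {X} (S T : X -> Prop) :
  infinite_set S -> (forall x, S x -> T x) -> infinite_set T.
Proof.
  intros HS HST [l Hl]. apply HS. exists l. intros x Hx. apply Hl, HST, Hx.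
Qed.

Lemma seq_le_refl x : seq_le x x.
Proof. exists []. now rewrite app_nil_r. Qed.

Lemma prefix_finite a : finite_set (fun x => seq_le x a).
Proof.
  exists (map (fun k => firstn k a) (seq 0 (S (length a)))).
  intros x [u Hu]. apply in_map_iff. exists (length x). split.
  - subst a. rewrite firstn_app, Nat.sub_diag, firstn_O, app_nil_r.
    apply firstn_all.
  - apply in_seq. subst a. rewrite length_app. lia.
Qed.

Lemma le_common a b x : seq_le a x -> seq_le b x -> seq_le a b \/ seq_le b a.
Proof.
  intros [u Hu] [v Hv]. rewrite Hu in Hv.
  destruct (app_eq_app _ _ _ _ Hv) as [l [[H1 _]|[H1 _]]].
  - right. exists l. exact H1.
  - left. exists l. exact H1.
Qed.

Lemma split_inf (I : list nat -> Prop) a a' :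
  incomp a a' -> infinite_set I ->
  infinite_set (fun x => I x /\ incomp a x) \/
  infinite_set (fun x => I x /\ incomp a' x).
Proof.
  intros Haa HI.
  destruct (classic (infinite_set (fun x => I x /\ incomp a x))) as [H|H]; auto.
  right. intros [l' Hl']. apply NNPP in H. destruct H as [l Hl].
  destruct (prefix_finite a) as [pa Hpa].
  destruct (prefix_finite a') as [pa' Hpa'].
  apply HI. exists (l ++ l' ++ pa ++ pa'). intros x Hx.
  rewrite !in_app_iff.
  destruct (classic (incomp a x)) as [H1|H1]. { left. apply Hl. auto. }
  destruct (classic (incomp a' x)) as [H2|H2]. { right; left. apply Hl'. auto. }
  unfold incomp in H1, H2.
  destruct (classic (seq_le x a)) as [H3|H3]. { do 2 right; left. auto. }
  destruct (classic (seq_le x a')) as [H4|H4]. { do 3 right. auto. }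
  assert (seq_le a x) by (apply NNPP; tauto).
  assert (seq_le a' x) by (apply NNPP; tauto).
  exfalso. destruct (le_common a a' x); auto; unfold incomp in Haa; tauto.
Qed.

Lemma step_exists An :
  (forall m, no_inf_chain_family (An m)) ->
  forall s, Inv An s -> exists s', Rel An s s'.
Proof.
  intros Hno [[F lo] M] [Hlo [HM HI]].
  destruct (HM 0) as [n [_ Hn]].
  set (In_ := fun x => An n x /\ forall f, In f F -> incomp f x).
  assert (Hpair : exists a a', In_ a /\ In_ a' /\ incomp a a').
  { destruct (classic (exists a a', In_ a /\ In_ a' /\ incomp a a')) as [H|H]; auto.
    exfalso. apply (proj2 (Hno n)). exists In_. split; [|split].
    - intros x Hx. apply Hx.
    - apply HI, Hn.
    - intros s t Hs Ht. destruct (classic (seq_le s t \/ seq_le t s)) as [|Hc]; auto.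
      exfalso. apply H. exists s, t. unfold incomp. tauto. }
  destruct Hpair as [a [a' [Ha [Ha' Haa]]]].
  set (J := fun b m => fun x => (An m x /\ forall f, In f F -> incomp f x) /\ incomp b x).
  set (G := fun b m => M m /\ n < m /\ infinite_set (J b m)).
  assert (Hch : (forall k, exists m, k <= m /\ G a m) \/ (forall k, exists m, k <= m /\ G a' m)).
  { destruct (classic (forall k, exists m, k <= m /\ G a m)) as [H|H]; auto.
    right. apply not_all_ex_not in H. destruct H as [k0 Hk0].
    intros k. destruct (HM (k + k0 + S n)) as [m [Hm1 Hm2]].
    exists m. split; [lia|].
    destruct (split_inf _ a a' Haa (HI m Hm2)) as [H|H].
    - exfalso. apply Hk0. exists m. split; [lia|]. unfold G. split; [auto|split; [lia|exact H]].
    - unfold G. split; [auto|split; [lia|exact H]]. }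
  assert (Hgen : forall b, In_ b -> (forall k, exists m, k <= m /\ G b m) ->
            exists s', Rel An (F, lo, M) s').
  { intros b Hb Hinf. exists (b :: F, S n, G b). simpl.
    exists b, n, (G b). split; [exact Hn|]. split; [apply Hb|]. split; [apply Hb|].
    split; [reflexivity|]. split; [|split].
    - intros m [_ [Hm _]]. lia.
    - exact Hinf.
    - intros m [_ [_ Hm]]. eapply infinite_mono; [exact Hm|].
      intros x [[H1 H2] H3]. split; [exact H1|]. intros f [Hf|Hf]; [subst; auto|auto]. }
  destruct Hch as [H|H]; [exact (Hgen a Ha H) | exact (Hgen a' Ha' H)].
Qed.

Theorem mainTheorem18 : M_family no_inf_chain_family.
Proof.
  split; [|split].
  - intros A [H _]. exact H.
  - intros A B [_ HA] HBA HB. split; [exact HB|].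
    intros [C [HC1 [HC2 HC3]]]. apply HA. exists C. split; [|split]; auto.
    intros x Hx. apply HBA, HC1, Hx.
  - intros An Hno.
    assert (Hg : forall s, exists s', Inv An s -> Rel An s s').
    { intros s. destruct (classic (Inv An s)) as [H|H].
      - destruct (step_exists An Hno s H) as [s' Hs']. exists s'. auto.
      - exists s. tauto. }
    set (g := fun s => proj1_sig (constructive_indefinite_description _ (Hg s))).
    assert (Hgs : forall s, Inv An s -> Rel An s (g s)).
    { intros s. exact (proj2_sig (constructive_indefinite_description _ (Hg s))). }
    set (s0 := (@nil (list nat), 0, fun _ : nat => True) : state).
    assert (H0 : Inv An s0).
    { simpl. split; [intros; lia|split].
      - intros k. exists k. auto.
      - intros m _. eapply infinite_mono; [exact (proj1 (Hno m))|].
        intros x Hx. split; [exact Hx|]. intros f []. }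
    set (st := fun k => Nat.iter k g s0).
    set (a := fun k => hd [] (fst (fst (st (S k))))).
    set (nn := fun k => pred (snd (fst (st (S k))))).
    assert (Hall : forall k, Inv An (st k) /\ k <= snd (fst (st k)) /\
              (forall j, j < k -> In (a j) (fst (fst (st k)))) /\
              An (nn k) (a k) /\ k <= nn k /\
              (forall j, j < k -> incomp (a j) (a k))).
    { induction k as [|k IH].
      - assert (HR := Hgs s0 H0). simpl in HR.
        destruct HR as [b [n [M' [Hn [Hb [_ [E HI]]]]]]].
        assert (E1 : st 1 = g s0) by reflexivity.
        unfold a, nn. rewrite E1, E. simpl.
        split; [exact H0|]. split; [lia|]. split; [intros j Hj; lia|].
        split; [exact Hb|]. split; [lia|intros j Hj; lia].
      - destruct IH as [HIk [Hlok [HFk [HAk [Hnk Hik]]]]].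
        assert (HR := Hgs _ HIk).
        assert (ESk : st (S k) = g (st k)) by reflexivity.
        assert (ESSk : st (S (S k)) = g (st (S k))) by reflexivity.
        destruct (st k) as [[F lo] M] eqn:Ek.
        destruct HR as [b [n [M' [Hn [Hb [Hbi [E HI]]]]]]].
        simpl in HIk. destruct HIk as [Hlo _].
        assert (Hak : a k = b) by (unfold a; rewrite ESk, E; reflexivity).
        assert (Hnnk : nn k = n) by (unfold nn; rewrite ESk, E; reflexivity).
        assert (HIS : Inv An (b :: F, S n, M')) by (rewrite <- E; exact HI).
        assert (HR2 := Hgs _ HIS). simpl in HR2.
        destruct HR2 as [c [n2 [M3 [Hn2 [Hc [Hci [E2 HI2]]]]]]].
        assert (ESSk' : st (S (S k)) = g (b :: F, S n, M'))
          by (rewrite ESSk, ESk, E; reflexivity).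
        simpl in HIS. destruct HIS as [Hlo2 _].
        assert (Hak2 : a (S k) = c) by (unfold a; rewrite ESSk', E2; reflexivity).
        assert (Hnnk2 : nn (S k) = n2) by (unfold nn; rewrite ESSk', E2; reflexivity).
        simpl in Hlok, HFk.
        split; [rewrite ESk; exact HI|].
        specialize (Hlo n Hn). split; [rewrite ESk, E; simpl; lia|].
        split.
        { intros j Hj. rewrite ESk, E. simpl.
          destruct (Nat.eq_dec j k) as [->|Hjk]; [left; symmetry; exact Hak|right; apply HFk; lia]. }
        rewrite Hak2, Hnnk2. split; [exact Hc|]. split.
        { specialize (Hlo2 n2 Hn2). lia. }
        intros j Hj. apply Hci.
        destruct (Nat.eq_dec j k) as [->|Hjk]; [left; symmetry; exact Hak|right; apply HFk; lia]. }
    assert (Hinj : forall j k, a j = a k -> j = k).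
    { intros j k E. destruct (lt_eq_lt_dec j k) as [[H|H]|H]; auto.
      - exfalso. destruct (proj2 (proj2 (proj2 (proj2 (proj2 (Hall k))))) j H) as [H1 _].
        rewrite E in H1. apply H1, seq_le_refl.
      - exfalso. destruct (proj2 (proj2 (proj2 (proj2 (proj2 (Hall j))))) k H) as [H1 _].
        rewrite E in H1. apply H1, seq_le_refl. }
    exists (fun x => exists k, x = a k). split; [split|].
    + intros [l Hl].
      assert (Hle : length (map a (seq 0 (S (length l)))) <= length l).
      { apply NoDup_incl_length.
        - apply Injective_map_NoDup; [intros x y; apply Hinj|apply seq_NoDup].
        - intros x Hx. apply in_map_iff in Hx. destruct Hx as [k [<- _]].
          apply Hl. eauto. }
      rewrite length_map, length_seq in Hle. lia.
    + intros [C [HC1 [HC2 HC3]]]. apply HC2.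
      destruct (classic (exists x, C x)) as [[x Hx]|Hn].
      * exists [x]. intros y Hy. left.
        destruct (HC1 x Hx) as [j ->]. destruct (HC1 y Hy) as [k ->].
        destruct (lt_eq_lt_dec j k) as [[H|H]|H].
        -- exfalso. destruct (proj2 (proj2 (proj2 (proj2 (proj2 (Hall k))))) j H).
           destruct (HC3 _ _ Hx Hy); tauto.
        -- subst; auto.
        -- exfalso. destruct (proj2 (proj2 (proj2 (proj2 (proj2 (Hall j))))) k H).
           destruct (HC3 _ _ Hx Hy); tauto.
      * exists []. intros y Hy. apply Hn. eauto.
    + intros n. exists (map a (seq 0 n)). intros x [[k ->] Hx].
      apply in_map_iff. exists k. split; [reflexivity|]. apply in_seq.
      destruct (le_lt_dec n k) as [H|H]; [|lia].
      exfalso. apply Hx. exists (nn k).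
      destruct (Hall k) as [_ [_ [_ [HA [Hk _]]]]]. split; [lia|exact HA].
Qed.
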